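(* Consider a finite-state Markov chain on a set $Q$ of states with $|Q|=n\ge1$, and let $y_{\min}$ be its smallest nonzero transition probability. Let $p\in Q$ and $S\subseteq Q$, and on runs starting in $p$ let $T$ be the number of steps after which the run first visits a state of $S$ ($T$ undefined if the run never visits $S$). Then for all $k\ge n$, $\mathcal{P}(T\text{ is defined and }T\ge k)\le 2c^k$, where $c=\exp(-y_{\min}^n/n)$. Moreover, if $\mathcal{P}(T\text{ is defined})=1$, then $\mathbb{E}T\le 5n/y_{\min}^n$.
   Context: Standard finite-state discrete-time Markov chain; $\mathcal{P}$ and $\mathbb{E}$ are probability and expectation over runs starting in $p$. *)

(* Defs.v *)
From Stdlib Require Import Reals.
Open Scope R_scope.

(* A finite-state discrete-time Markov chain on the state set Q = {0,...,n-1},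
   given by a transition matrix P : nat -> nat -> R. *)
Definition is_stochastic (n : nat) (P : nat -> nat -> R) : Prop :=
  (forall i j, (i < n)%nat -> (j < n)%nat -> 0 <= P i j) /\
  (forall i, (i < n)%nat -> sum_f_R0 (fun j => P i j) (n - 1) = 1).

Definition is_min_nonzero_prob (n : nat) (P : nat -> nat -> R) (ymin : R) : Prop :=
  (exists i j, (i < n)%nat /\ (j < n)%nat /\ P i j <> 0 /\ P i j = ymin) /\
  (forall i j, (i < n)%nat -> (j < n)%nat -> P i j <> 0 -> ymin <= P i j).

(* hit_prob n P S t i = probability, over runs starting in state i, that the
   run visits a state of A for the first time after exactly t steps
   (i.e. the measure of the event {T = t}); computed as the sum over finite
   path prefixes of their probabilities. *)
Fixpoint hit_prob (n : nat) (P : nat -> nat -> R) (A : nat -> bool)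
    (t : nat) (i : nat) : R :=
  match t with
  | O => if A i then 1 else 0
  | Datatypes.S t' => if A i then 0
            else sum_f_R0 (fun j => P i j * hit_prob n P A t' j) (n - 1)
  end.

(* Main.v *)
Require Import Defs.
From Stdlib Require Import Reals Lra Lia List Bool Classical.
Open Scope R_scope.

Lemma sumR_ext (f g : nat -> R) N :
  (forall j, (j <= N)%nat -> f j = g j) -> sum_f_R0 f N = sum_f_R0 g N.
Proof.
  induction N; intros H; simpl.
  - apply H; lia.
  - rewrite IHN by (intros; apply H; lia). rewrite H by lia. reflexivity.
Qed.

Lemma sumR_nonneg (f : nat -> R) N :
  (forall j, (j <= N)%nat -> 0 <= f j) -> 0 <= sum_f_R0 f N.
Proof.
  induction N; intros H; simpl.
  - apply H; lia.
  - assert (0 <= f (S N)) by (apply H; lia).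
    assert (0 <= sum_f_R0 f N) by (apply IHN; intros; apply H; lia). lra.
Qed.

Lemma sumR_le (f g : nat -> R) N :
  (forall j, (j <= N)%nat -> f j <= g j) -> sum_f_R0 f N <= sum_f_R0 g N.
Proof. intros; apply sum_Rle; auto. Qed.

Lemma sumR_zero (f : nat -> R) N :
  (forall j, (j <= N)%nat -> f j = 0) -> sum_f_R0 f N = 0.
Proof.
  induction N; intros H; simpl.
  - apply H; lia.
  - rewrite IHN by (intros; apply H; lia). rewrite H by lia. lra.
Qed.

Lemma sumR_nonzero (f : nat -> R) N :
  sum_f_R0 f N <> 0 -> exists j, (j <= N)%nat /\ f j <> 0.
Proof.
  intros H. apply NNPP. intros H2. apply H. apply sumR_zero.
  intros j Hj. apply NNPP. intros H3. apply H2. exists j. auto.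
Qed.

Lemma sumR_term (f : nat -> R) N j0 :
  (forall j, (j <= N)%nat -> 0 <= f j) -> (j0 <= N)%nat -> f j0 <= sum_f_R0 f N.
Proof.
  induction N; intros H Hj; simpl.
  - replace j0 with 0%nat by lia. lra.
  - destruct (Nat.eq_dec j0 (S N)) as [->|Hne].
    + assert (0 <= sum_f_R0 f N) by (apply sumR_nonneg; intros; apply H; lia). lra.
    + assert (f j0 <= sum_f_R0 f N) by (apply IHN; [intros; apply H; lia | lia]).
      assert (0 <= f (S N)) by (apply H; lia). lra.
Qed.

Lemma sumR_shift (f : nat -> R) N :
  sum_f_R0 f (S N) = f 0%nat + sum_f_R0 (fun m => f (S m)) N.
Proof.
  induction N.
  - simpl. lra.
  - change (sum_f_R0 f (S (S N))) with (sum_f_R0 f (S N) + f (S (S N))).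
    rewrite IHN. simpl. lra.
Qed.

Lemma conv_bounded (s : nat -> R) (B : R) :
  (forall t, 0 <= s t) -> (forall N, sum_f_R0 s N <= B) ->
  exists l, infinite_sum s l /\ l <= B.
Proof.
  intros Hs HB.
  destruct (growing_cv (fun N => sum_f_R0 s N)) as [l Hl].
  - intros k. simpl. specialize (Hs (S k)). lra.
  - exists B. intros x [i ->]. apply HB.
  - exists l. split; [exact Hl|].
    destruct (Rle_dec l B) as [|Hlt]; [assumption|].
    exfalso. destruct (Hl (l - B)) as [N HN]; [lra|].
    specialize (HN N (le_n _)). unfold Rdist in HN.
    apply Rabs_def2 in HN. specialize (HB N). lra.
Qed.

Lemma exp_pow_INR x k : exp x ^ k = exp (INR k * x).
Proof.
  induction k.
  - simpl. rewrite Rmult_0_l, exp_0. reflexivity.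
  - rewrite S_INR. simpl pow. rewrite IHk.
    rewrite <- exp_plus. f_equal. ring.
Qed.
Lemma key_ineq q : 0 <= q <= 1 -> 1 - q <= 2 * exp (- (2 * q)).
Proof.
  intros Hq.
  replace (- (2*q)) with (-1 + (1 - 2*q)) by ring.
  rewrite exp_plus.
  assert (H1 := exp_ineq1_le (1 - 2*q)).
  assert (H2 := exp_le_3).
  assert (H3 : 0 < exp 1) by apply exp_pos.
  assert (He : exp (-1) = / exp 1).
  { rewrite <- exp_Ropp. f_equal. }
  rewrite He.
  assert (H4 : 0 < / exp 1) by (apply Rinv_0_lt_compat; lra).
  assert (H5 : / 3 <= / exp 1) by (apply Rinv_le_contravar; lra).
  assert (0 <= 2 - 2*q) by lra.
  assert (/ exp 1 * (2 - 2*q) <= / exp 1 * exp (1 - 2*q)) by (apply Rmult_le_compat_l; lra).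
  assert (/3 * (2 - 2*q) <= / exp 1 * (2 - 2*q)) by (apply Rmult_le_compat_r; lra).
  lra.
Qed.

Lemma num_bound (q : R) (n k : nat) :
  0 < q <= 1 -> (1 <= n)%nat -> (n <= k)%nat ->
  (1 - q) ^ (k / n) <= 2 * exp (- q / INR n) ^ k.
Proof.
  intros Hq Hn Hk.
  set (j := (k / n)%nat).
  assert (Hj1 : (1 <= j)%nat).
  { unfold j. apply Nat.div_le_lower_bound; lia. }
  assert (Hkj : (k < (j+1) * n)%nat).
  { unfold j. assert (H := Nat.div_mod_eq k n). assert (H2 := Nat.mod_upper_bound k n). lia. }
  rewrite exp_pow_INR.
  assert (Hn' : 0 < INR n) by (apply lt_0_INR; lia).
  assert (HkR : INR k < INR (j+1) * INR n) by (rewrite <- mult_INR; apply lt_INR; lia).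
  assert (Hexp : exp (- q * INR (j+1)) <= exp (INR k * (- q / INR n))).
  { apply Rlt_le, exp_increasing.
    replace (INR k * (- q / INR n)) with (- q * (INR k / INR n)) by (field; lra).
    assert (INR k / INR n < INR (j+1)).
    { apply (Rmult_lt_reg_r (INR n)); [lra|]. unfold Rdiv. rewrite Rmult_assoc, Rinv_l by lra. lra. }
    nra. }
  destruct j as [|j']; [lia|].
  rewrite Nat.add_1_r in Hexp.
  rewrite S_INR, S_INR in Hexp.
  replace (- q * (INR j' + 1 + 1)) with (- (2*q) + INR j' * (-q)) in Hexp by ring.
  rewrite exp_plus, <- exp_pow_INR in Hexp.
  simpl pow.
  assert (Hp : (1 - q) ^ j' <= exp (-q) ^ j').
  { apply pow_incr. split; [lra|]. assert (H := exp_ineq1_le (-q)). lra. }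
  assert (0 <= (1 - q) ^ j') by (apply pow_le; lra).
  assert (0 < exp (-q) ^ j') by (apply pow_lt, exp_pos).
  assert (Hki := key_ineq q ltac:(lra)).
  assert (0 < exp (- (2*q))) by apply exp_pos.
  assert ((1 - q) * (1 - q) ^ j' <= (1-q) * exp (-q) ^ j') by (apply Rmult_le_compat_l; lra).
  assert ((1-q) * exp (-q) ^ j' <= 2 * exp (- (2*q)) * exp (-q) ^ j') by (apply Rmult_le_compat_r; lra).
  lra.
Qed.

Section Chain.
Variable n : nat.
Variable P : nat -> nat -> R.
Variable T : nat -> bool.
Variable hn : (1 <= n)%nat.
Variable hP : is_stochastic n P.

Definition A (f : nat -> R) (i : nat) : R :=
  if T i then 0 else sum_f_R0 (fun j => P i j * f j) (n - 1).

Fixpoint iterA (k : nat) (f : nat -> R) : nat -> R :=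
  match k with
  | O => f
  | Datatypes.S k' => fun i => A (iterA k' f) i
  end.

Lemma Pnn i j : (i < n)%nat -> (j < n)%nat -> 0 <= P i j.
Proof. intros; apply (proj1 hP); auto. Qed.

Lemma Prow i : (i < n)%nat -> sum_f_R0 (fun j => P i j) (n - 1) = 1.
Proof. intros; apply (proj2 hP); auto. Qed.

Lemma A_ext f g i : (forall j, (j < n)%nat -> f j = g j) -> A f i = A g i.
Proof.
  intros H. unfold A. destruct (T i); auto.
  apply sumR_ext. intros j Hj. rewrite H by lia. reflexivity.
Qed.

Lemma A_mono f g i : (i < n)%nat -> (forall j, (j < n)%nat -> f j <= g j) -> A f i <= A g i.
Proof.
  intros Hi H. unfold A. destruct (T i); [lra|].
  apply sumR_le. intros j Hj. apply Rmult_le_compat_l; [apply Pnn; lia|]. apply H; lia.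
Qed.

Lemma A_nonneg f i : (i < n)%nat -> (forall j, (j < n)%nat -> 0 <= f j) -> 0 <= A f i.
Proof.
  intros Hi H. unfold A. destruct (T i); [lra|].
  apply sumR_nonneg. intros j Hj. apply Rmult_le_pos; [apply Pnn; lia|]. apply H; lia.
Qed.

Lemma A_le1 f i : (i < n)%nat -> (forall j, (j < n)%nat -> f j <= 1) -> A f i <= 1.
Proof.
  intros Hi H. unfold A. destruct (T i); [lra|].
  rewrite <- (Prow i Hi). apply sumR_le. intros j Hj.
  assert (0 <= P i j) by (apply Pnn; lia). assert (f j <= 1) by (apply H; lia). nra.
Qed.

Lemma A_scal c f i : A (fun j => c * f j) i = c * A f i.
Proof.
  unfold A. destruct (T i); [ring|].
  rewrite scal_sum. apply sumR_ext. intros; ring.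
Qed.

Lemma A_plus f g i : A (fun j => f j + g j) i = A f i + A g i.
Proof.
  unfold A. destruct (T i); [ring|].
  rewrite <- plus_sum. apply sumR_ext. intros; ring.
Qed.

Lemma A_zero i : A (fun _ => 0) i = 0.
Proof.
  unfold A. destruct (T i); [ring|]. apply sumR_zero. intros; ring.
Qed.

Lemma iterA_ext k f g i : (i < n)%nat -> (forall j, (j < n)%nat -> f j = g j) -> iterA k f i = iterA k g i.
Proof.
  revert i. induction k; intros i Hi H; simpl; auto.
  apply A_ext. intros j Hj. apply IHk; auto.
Qed.

Lemma iterA_mono k f g i : (i < n)%nat -> (forall j, (j < n)%nat -> f j <= g j) ->
  iterA k f i <= iterA k g i.
Proof.
  revert i. induction k; intros i Hi H; simpl; auto.
  apply A_mono; auto.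
Qed.

Lemma iterA_nonneg k f i : (i < n)%nat -> (forall j, (j < n)%nat -> 0 <= f j) -> 0 <= iterA k f i.
Proof.
  revert i. induction k; intros i Hi H; simpl; auto.
  apply A_nonneg; auto.
Qed.

Lemma iterA_le1 k f i : (i < n)%nat -> (forall j, (j < n)%nat -> f j <= 1) -> iterA k f i <= 1.
Proof.
  revert i. induction k; intros i Hi H; simpl; auto.
  apply A_le1; auto.
Qed.

Lemma iterA_scal k c f i : iterA k (fun j => c * f j) i = c * iterA k f i.
Proof.
  revert i. induction k; intros i; simpl; auto.
  rewrite <- A_scal. apply A_ext. intros; auto.
Qed.

Lemma iterA_plus k f g i : iterA k (fun j => f j + g j) i = iterA k f i + iterA k g i.
Proof.
  revert i. induction k; intros i; simpl; auto.
  rewrite <- A_plus. apply A_ext. intros; auto.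
Qed.

Lemma iterA_zero k i : iterA k (fun _ => 0) i = 0.
Proof.
  revert i. induction k; intros i; simpl; auto.
  transitivity (A (fun _ => 0) i); [|apply A_zero]. apply A_ext. intros; auto.
Qed.

Lemma iterA_sum k (F : nat -> nat -> R) M i : (i < n)%nat ->
  iterA k (fun j => sum_f_R0 (fun m => F m j) M) i = sum_f_R0 (fun m => iterA k (F m) i) M.
Proof.
  revert i. induction M; intros i Hi; simpl; auto.
  rewrite <- IHM by auto. rewrite <- iterA_plus. apply iterA_ext; auto.
Qed.

Lemma iterA_add a b f i : iterA (a + b) f i = iterA a (iterA b f) i.
Proof.
  revert i. induction a; intros i; simpl; auto.
  apply A_ext. intros; auto.
Qed.

Definition h t i := hit_prob n P T t i.

Lemma h_iter k m i : h (k + m) i = iterA k (h m) i.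
Proof.
  revert i. induction k; intros i; simpl; auto.
  unfold h at 1. simpl. fold (A (hit_prob n P T (k + m)) i).
  apply A_ext. intros j _. apply IHk.
Qed.

Lemma h_succ m i : h (Datatypes.S m) i = A (h m) i.
Proof. reflexivity. Qed.

Lemma h_nonneg m i : (i < n)%nat -> 0 <= h m i.
Proof.
  revert i. induction m; intros i Hi.
  - unfold h; simpl. destruct (T i); lra.
  - rewrite h_succ. apply A_nonneg; auto.
Qed.

Lemma h_total M i : (i < n)%nat -> sum_f_R0 (fun m => h m i) M <= 1.
Proof.
  revert i. induction M; intros i Hi.
  - unfold h; simpl. destruct (T i); lra.
  - rewrite sumR_shift.
    destruct (T i) eqn:Ti.
    + unfold h at 1; simpl; rewrite Ti.
      rewrite sumR_zero; [lra|]. intros j _. unfold h; simpl. rewrite Ti. reflexivity.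
    + unfold h at 1; simpl; rewrite Ti.
      assert (E : sum_f_R0 (fun m => h (Datatypes.S m) i) M
                  = iterA 1 (fun j => sum_f_R0 (fun m => h m j) M) i).
      { rewrite iterA_sum by auto. reflexivity. }
      rewrite E. simpl. assert (A (fun j => sum_f_R0 (fun m => h m j) M) i <= 1); [|lra].
      apply A_le1; auto.
Qed.


Definition pos (i j : nat) : bool := if Rlt_dec 0 (P i j) then true else false.

Fixpoint W (t i : nat) : bool :=
  match t with
  | O => T i
  | Datatypes.S t' => T i || existsb (fun j => pos i j && W t' j) (seq 0 n)
  end.

Lemma W_mono1 t i : W t i = true -> W (Datatypes.S t) i = true.
Proof.
  revert i. induction t; intros i H.
  - simpl in *. rewrite H. reflexivity.
  - change (W (Datatypes.S (Datatypes.S t)) i) with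
      (T i || existsb (fun j => pos i j && W (Datatypes.S t) j) (seq 0 n)).
    simpl in H. apply orb_true_iff in H. apply orb_true_iff. destruct H as [H|H]; [left; auto|right].
    apply existsb_exists in H. apply existsb_exists. destruct H as [j [Hj Hj2]].
    exists j. split; auto. apply andb_true_iff in Hj2. apply andb_true_iff. destruct Hj2; split; auto.
Qed.

Lemma W_mono t t' i : (t <= t')%nat -> W t i = true -> W t' i = true.
Proof.
  intros Hle. induction Hle; auto. intros H. apply W_mono1; auto.
Qed.

Lemma existsb_ext_in (f g : nat -> bool) l :
  (forall x, In x l -> f x = g x) -> existsb f l = existsb g l.
Proof.
  induction l; intros H; simpl; auto.
  rewrite H by (left; auto). rewrite IHl; auto. intros; apply H; right; auto.
Qed.

Definition stable s := forall i, (i < n)%nat -> W (Datatypes.S s) i = W s i.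

Lemma W_stable s : stable s -> stable (Datatypes.S s).
Proof.
  intros H i Hi.
  change (W (Datatypes.S (Datatypes.S s)) i) with
      (T i || existsb (fun j => pos i j && W (Datatypes.S s) j) (seq 0 n)).
  change (W (Datatypes.S s) i) with
      (T i || existsb (fun j => pos i j && W s j) (seq 0 n)).
  f_equal. apply existsb_ext_in. intros x Hx. apply in_seq in Hx.
  rewrite (H x) by lia. reflexivity.
Qed.

Lemma W_stable_all s : stable s -> forall d i, (i < n)%nat -> W (d + s) i = W s i.
Proof.
  intros Hs.
  assert (Hst : forall d, stable (d + s)).
  { induction d; simpl; auto. apply W_stable; auto. }
  induction d; intros i Hi; [reflexivity|].
  change (Datatypes.S d + s)%nat with (Datatypes.S (d + s)).
  rewrite (Hst d i Hi). auto.
Qed.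

Lemma filter_len_le (f : nat -> bool) l : (length (filter f l) <= length l)%nat.
Proof. induction l; simpl; auto. destruct (f a); simpl; lia. Qed.

Lemma filter_len_mono (f g : nat -> bool) l :
  (forall x, In x l -> f x = true -> g x = true) ->
  (length (filter f l) <= length (filter g l))%nat.
Proof.
  induction l; intros H; simpl; auto.
  assert (IH : (length (filter f l) <= length (filter g l))%nat) by (apply IHl; intros; apply H; auto; right; auto).
  destruct (f a) eqn:Fa.
  - rewrite (H a (or_introl eq_refl) Fa). simpl. lia.
  - destruct (g a); simpl; lia.
Qed.

Lemma filter_len_strict (f g : nat -> bool) l :
  (forall x, In x l -> f x = true -> g x = true) ->
  (exists x, In x l /\ f x = false /\ g x = true) ->
  (Datatypes.S (length (filter f l)) <= length (filter g l))%nat.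
Proof.
  induction l; intros H [x [Hx [Fx Gx]]]; simpl in *; [contradiction|].
  destruct Hx as [<-|Hx].
  - rewrite Fx, Gx. simpl.
    assert (length (filter f l) <= length (filter g l))%nat by (apply filter_len_mono; intros; apply H; auto).
    lia.
  - assert (IH : (Datatypes.S (length (filter f l)) <= length (filter g l))%nat).
    { apply IHl; [intros; apply H; auto | exists x; auto]. }
    destruct (f a) eqn:Fa.
    + rewrite (H a (or_introl eq_refl) Fa). simpl. lia.
    + destruct (g a); simpl; lia.
Qed.

Lemma filter_full (f : nat -> bool) l :
  (length l <= length (filter f l))%nat -> forall x, In x l -> f x = true.
Proof.
  induction l; intros H x Hx; simpl in *; [contradiction|].
  destruct (f a) eqn:Fa.
  - destruct Hx as [<-|Hx]; auto. apply IHl; auto. simpl in H. lia.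
  - assert (Hl := filter_len_le f l). simpl in H. lia.
Qed.

Lemma filter_empty (f : nat -> bool) l :
  length (filter f l) = 0%nat -> forall x, In x l -> f x = false.
Proof.
  induction l; intros H x Hx; simpl in *; [contradiction|].
  destruct (f a) eqn:Fa; simpl in H; [lia|].
  destruct Hx as [<-|Hx]; auto.
Qed.

Definition cnt t := length (filter (W t) (seq 0 n)).

Lemma pigeon s : (exists s', (s' < s)%nat /\ stable s') \/ (s + cnt 0 <= cnt s)%nat.
Proof.
  induction s.
  - right. simpl. lia.
  - destruct IHs as [[s' [H1 H2]]|IH].
    + left. exists s'. split; auto; lia.
    + destruct (classic (stable s)) as [Hs|Hs].
      * left. exists s. split; auto.
      * right. assert (Datatypes.S (cnt s) <= cnt (Datatypes.S s))%nat; [|lia].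
        apply filter_len_strict.
        -- intros x _ Hx. apply W_mono1; auto.
        -- apply NNPP. intros Hne. apply Hs. intros i Hi.
           destruct (W s i) eqn:E1.
           ++ apply W_mono1; auto.
           ++ destruct (W (Datatypes.S s) i) eqn:E2; auto.
              exfalso. apply Hne. exists i. repeat split; auto. apply in_seq. lia.
Qed.

Lemma W_empty : (forall j, (j < n)%nat -> T j = false) ->
  forall t i, (i < n)%nat -> W t i = false.
Proof.
  intros HT t. induction t; intros i Hi; simpl; auto.
  rewrite HT by auto. simpl.
  apply not_true_is_false. intros H. apply existsb_exists in H.
  destruct H as [j [Hj Hj2]]. apply in_seq in Hj. rewrite IHt in Hj2 by lia.
  rewrite andb_false_r in Hj2. discriminate.
Qed.

Lemma W_bound t i : (i < n)%nat -> W t i = true -> W (n - 1) i = true.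
Proof.
  intros Hi Ht.
  destruct (Compare_dec.le_lt_dec t (n - 1)) as [Hle|Hlt].
  - apply (W_mono t); auto.
  - destruct (pigeon (n - 1)) as [[s' [H1 H2]]|H].
    + apply (W_mono s'); [lia|].
      rewrite <- (W_stable_all s' H2 (t - s') i Hi).
      replace (t - s' + s')%nat with t by lia. auto.
    + destruct (Nat.eq_dec (cnt 0) 0) as [H0|H0].
      * exfalso.
        assert (HT : forall j, (j < n)%nat -> T j = false).
        { intros j Hj. apply (filter_empty (W 0) (seq 0 n) H0 j). apply in_seq. lia. }
        rewrite (W_empty HT t i Hi) in Ht. discriminate.
      * apply (filter_full (W (n - 1)) (seq 0 n)).
        -- rewrite length_seq. unfold cnt in H, H0. lia.
        -- apply in_seq. lia.
Qed.


Variable ymin : R.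
Variable hy : is_min_nonzero_prob n P ymin.

Lemma ymin_pos : 0 < ymin.
Proof.
  destruct hy as [[i [j [Hi [Hj [Hne Heq]]]]] _].
  assert (0 <= P i j) by (apply Pnn; auto). rewrite <- Heq. lra.
Qed.

Lemma P_le1 i j : (i < n)%nat -> (j < n)%nat -> P i j <= 1.
Proof.
  intros Hi Hj. rewrite <- (Prow i Hi).
  apply (sumR_term (fun j => P i j)); [intros; apply Pnn; lia | lia].
Qed.

Lemma ymin_le1 : ymin <= 1.
Proof.
  destruct hy as [[i [j [Hi [Hj [Hne Heq]]]]] _].
  rewrite <- Heq. apply P_le1; auto.
Qed.

Lemma P_ge i j : (i < n)%nat -> (j < n)%nat -> P i j <> 0 -> ymin <= P i j.
Proof. intros; apply (proj2 hy); auto. Qed.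

Lemma h_W m i : (i < n)%nat -> h m i <> 0 -> W m i = true.
Proof.
  revert i. induction m; intros i Hi H.
  - unfold h in H; simpl in *. destruct (T i); auto; lra.
  - rewrite h_succ in H. unfold A in H. simpl.
    destruct (T i) eqn:Ti; [lra|]. simpl.
    apply sumR_nonzero in H. destruct H as [j [Hj Hne]].
    apply existsb_exists. exists j. split; [apply in_seq; lia|].
    apply andb_true_iff. split.
    + unfold pos. destruct (Rlt_dec 0 (P i j)) as [|Hn]; auto.
      exfalso. assert (0 <= P i j) by (apply Pnn; lia).
      assert (P i j = 0) by lra. rewrite H0 in Hne. apply Hne. ring.
    + apply IHm; [lia|]. intros H0. apply Hne. rewrite H0. ring.
Qed.

Definition chi j : R := if W (n - 1) j then 1 else 0.

Lemma chi_closed i j : (i < n)%nat -> W (n - 1) i = false -> (j < n)%nat -> P i j <> 0 ->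
  W (n - 1) j = false.
Proof.
  intros Hi Hw Hj Hp. apply not_true_is_false. intros Hwj.
  assert (Hn : W n i = true).
  { replace n with (Datatypes.S (n - 1)) at 1 by lia. simpl.
    apply orb_true_iff. right. apply existsb_exists. exists j. split; [apply in_seq; lia|].
    apply andb_true_iff. split; auto. unfold pos. destruct (Rlt_dec 0 (P i j)) as [|Hn]; auto.
    exfalso. assert (0 <= P i j) by (apply Pnn; lia). lra. }
  rewrite (W_bound n i Hi Hn) in Hw. discriminate.
Qed.

Lemma A_supp f i : (i < n)%nat -> W (n - 1) i = false ->
  (forall j, (j < n)%nat -> W (n - 1) j = false -> f j = 0) -> A f i = 0.
Proof.
  intros Hi Hw Hf. unfold A. destruct (T i); auto.
  apply sumR_zero. intros j Hj.
  destruct (Req_dec (P i j) 0) as [E|E]; [rewrite E; ring|].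
  rewrite Hf; [ring|lia|]. apply (chi_closed i j); auto; lia.
Qed.

Lemma iterA_supp k f i : (i < n)%nat -> W (n - 1) i = false ->
  (forall j, (j < n)%nat -> W (n - 1) j = false -> f j = 0) -> iterA k f i = 0.
Proof.
  revert i. induction k; intros i Hi Hw Hf; simpl; auto.
  apply A_supp; auto.
Qed.

Lemma chi_nn j : 0 <= chi j.
Proof. unfold chi. destruct (W (n-1) j); lra. Qed.
Lemma chi_le1 j : chi j <= 1.
Proof. unfold chi. destruct (W (n-1) j); lra. Qed.

Lemma A_chi_le i : (i < n)%nat -> A chi i <= chi i.
Proof.
  intros Hi. unfold chi at 2. destruct (W (n - 1) i) eqn:E.
  - apply A_le1; auto. intros; apply chi_le1.
  - rewrite A_supp; auto; [lra|]. intros j _ Hj. unfold chi. rewrite Hj. auto.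
Qed.

Lemma iterA_chi_le r i : (i < n)%nat -> iterA r chi i <= chi i.
Proof.
  revert i. induction r; intros i Hi; simpl; [lra|].
  apply Rle_trans with (A chi i); [|apply A_chi_le; auto].
  apply A_mono; auto.
Qed.

Lemma surv_bound t i : (i < n)%nat -> W t i = true ->
  iterA (Datatypes.S t) (fun _ => 1) i <= 1 - ymin ^ t.
Proof.
  revert i. induction t; intros i Hi Hw.
  - simpl in *. unfold A. rewrite Hw. lra.
  - change (iterA (Datatypes.S (Datatypes.S t)) (fun _ => 1) i) with
      (A (iterA (Datatypes.S t) (fun _ => 1)) i).
    unfold A. simpl in Hw.
    assert (Hy1 := ymin_le1). assert (Hy0 := ymin_pos).
    assert (0 <= ymin ^ Datatypes.S t) by (apply pow_le; lra).
    assert (ymin ^ Datatypes.S t <= 1) by (rewrite <- (pow1 (Datatypes.S t)); apply pow_incr; lra).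
    destruct (T i) eqn:Ti; [lra|]. simpl in Hw.
    apply existsb_exists in Hw. destruct Hw as [j0 [Hj0 Hw]]. apply in_seq in Hj0.
    apply andb_true_iff in Hw. destruct Hw as [Hpos Hw].
    unfold pos in Hpos. destruct (Rlt_dec 0 (P i j0)) as [Hp|]; [|discriminate].
    set (a := iterA (Datatypes.S t) (fun _ => 1)).
    assert (Ha1 : forall j, (j < n)%nat -> a j <= 1) by (intros; apply iterA_le1; auto; intros; lra).
    assert (Haj0 : a j0 <= 1 - ymin ^ t) by (apply IHt; auto; lia).
    assert (E : sum_f_R0 (fun j => P i j * a j) (n - 1)
                = sum_f_R0 (fun j => P i j) (n - 1) - sum_f_R0 (fun j => P i j * (1 - a j)) (n - 1)).
    { rewrite <- minus_sum. apply sumR_ext. intros; ring. }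
    rewrite E, Prow by auto.
    assert (Hterm : P i j0 * (1 - a j0) <= sum_f_R0 (fun j => P i j * (1 - a j)) (n - 1)).
    { apply (sumR_term (fun j => P i j * (1 - a j))); [|lia].
      intros j Hj. apply Rmult_le_pos; [apply Pnn; lia|]. assert (a j <= 1) by (apply Ha1; lia). lra. }
    assert (Hge : ymin <= P i j0) by (apply P_ge; [auto|lia|lra]).
    assert (0 <= ymin ^ t) by (apply pow_le; lra).
    assert (ymin * ymin ^ t <= P i j0 * (1 - a j0)) by (apply Rmult_le_compat; lra).
    simpl pow. lra.
Qed.

Definition q := ymin ^ n.

Lemma q_bounds : 0 < q <= 1.
Proof.
  unfold q. assert (Hy1 := ymin_le1). assert (Hy0 := ymin_pos). split.
  - apply pow_lt; lra.
  - rewrite <- (pow1 n). apply pow_incr. lra.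
Qed.

Lemma key_contract i : (i < n)%nat -> iterA n chi i <= (1 - q) * chi i.
Proof.
  intros Hi. assert (Hq := q_bounds).
  unfold chi at 2. destruct (W (n - 1) i) eqn:E.
  - apply Rle_trans with (iterA n (fun _ => 1) i).
    + apply iterA_mono; auto. intros; apply chi_le1.
    + replace n with (Datatypes.S (n - 1)) at 1 by lia.
      apply Rle_trans with (1 - ymin ^ (n - 1)); [apply surv_bound; auto|].
      unfold q. replace n with (Datatypes.S (n - 1)) at 2 by lia. simpl pow.
      assert (Hy1 := ymin_le1). assert (Hy0 := ymin_pos).
      assert (0 <= ymin ^ (n-1)) by (apply pow_le; lra).
      nra.
  - rewrite iterA_supp; auto; [lra|]. intros j _ Hj. unfold chi. rewrite Hj. auto.
Qed.

Definition b k i := iterA k chi i.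

Lemma b_nn k i : (i < n)%nat -> 0 <= b k i.
Proof. intros; apply iterA_nonneg; auto; intros; apply chi_nn. Qed.
Lemma b_le1 k i : (i < n)%nat -> b k i <= 1.
Proof. intros; apply iterA_le1; auto; intros; apply chi_le1. Qed.

Lemma b_shift k i : (i < n)%nat -> b (k + n) i <= (1 - q) * b k i.
Proof.
  intros Hi. unfold b. rewrite iterA_add. rewrite <- iterA_scal.
  apply iterA_mono; auto. intros; apply key_contract; auto.
Qed.

Lemma b_dec a r i : (i < n)%nat -> b (a + r) i <= b a i.
Proof.
  intros Hi. unfold b. rewrite iterA_add. apply iterA_mono; auto.
  intros; apply iterA_chi_le; auto.
Qed.

Lemma b_blocks j i : (i < n)%nat -> b (j * n) i <= (1 - q) ^ j.
Proof.
  intros Hi. assert (Hq := q_bounds). induction j.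
  - simpl. apply b_le1; auto.
  - replace (Datatypes.S j * n)%nat with (j * n + n)%nat by lia.
    apply Rle_trans with ((1 - q) * b (j * n) i); [apply b_shift; auto|].
    simpl. apply Rmult_le_compat_l; lra.
Qed.

Lemma G_le k M i : (i < n)%nat -> sum_f_R0 (fun m => h (k + m) i) M <= b k i.
Proof.
  intros Hi.
  rewrite (sumR_ext _ (fun m => iterA k (h m) i)) by (intros; apply h_iter).
  rewrite <- iterA_sum by auto. unfold b.
  apply iterA_mono; auto. intros j Hj.
  unfold chi. destruct (W (n - 1) j) eqn:E.
  - apply h_total; auto.
  - rewrite sumR_zero; [lra|]. intros m _.
    apply NNPP. intros Hne. apply (h_W m j Hj) in Hne.
    rewrite (W_bound m j Hj Hne) in E. discriminate.
Qed.

End Chain.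

Lemma weighted (x : nat -> R) (B : nat -> R) :
  (forall t, 0 <= x t) ->
  (forall k M, sum_f_R0 (fun m => x (Datatypes.S k + m)%nat) M <= B k) ->
  forall N, sum_f_R0 (fun t => INR t * x t) N <= sum_f_R0 B N.
Proof.
  intros Hx HB N. revert x B Hx HB. induction N; intros x B Hx HB.
  - simpl. specialize (HB 0%nat 0%nat). simpl in HB. specialize (Hx 1%nat). lra.
  - rewrite sumR_shift. rewrite (sumR_shift B).
    rewrite (sumR_ext _ (fun t => INR t * x (Datatypes.S t) + x (Datatypes.S t)))
      by (intros; rewrite S_INR; ring).
    rewrite plus_sum.
    assert (H1 : sum_f_R0 (fun t => INR t * x (Datatypes.S t)) N
                 <= sum_f_R0 (fun k => B (Datatypes.S k)) N).
    { apply (IHN (fun t => x (Datatypes.S t)) (fun k => B (Datatypes.S k))).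
      - intros; apply Hx.
      - intros k M. exact (HB (Datatypes.S k) M). }
    assert (H2 : sum_f_R0 (fun t => x (Datatypes.S t)) N <= B 0%nat) by exact (HB 0%nat N).
    simpl INR. lra.
Qed.

Lemma sum_mono (x : nat -> R) a c : (forall t, 0 <= x t) -> (a <= c)%nat ->
  sum_f_R0 x a <= sum_f_R0 x c.
Proof.
  intros Hx Hle. induction Hle; [lra|]. simpl. specialize (Hx (Datatypes.S m)). lra.
Qed.

Lemma sum_le_len (x : nat -> R) N : (forall t, x t <= 1) -> sum_f_R0 x N <= INR (Datatypes.S N).
Proof.
  intros Hx. induction N.
  - simpl. specialize (Hx 0%nat). lra.
  - simpl sum_f_R0. rewrite (S_INR (Datatypes.S N)). specialize (Hx (Datatypes.S N)). lra.
Qed.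

Lemma sum_geo_like (x : nat -> R) r m : (1 <= m)%nat ->
  (forall t, 0 <= x t) -> (forall t, x t <= 1) -> 0 <= r ->
  (forall k, x (k + m)%nat <= r * x k) ->
  forall N, sum_f_R0 x N <= INR m + r * sum_f_R0 x N.
Proof.
  intros Hm Hx0 Hx1 Hr Hsh.
  assert (Hc : forall N, sum_f_R0 x (N + m) <= INR m + r * sum_f_R0 x N).
  { induction N.
    - replace (0 + m)%nat with (Datatypes.S (m - 1)) by lia. simpl sum_f_R0.
      assert (H1 := sum_le_len x (m - 1) Hx1).
      replace (Datatypes.S (m - 1)) with m in * by lia.
      specialize (Hsh 0%nat). simpl plus in Hsh. lra.
    - replace (Datatypes.S N + m)%nat with (Datatypes.S (N + m)) by lia.
      simpl sum_f_R0. specialize (Hsh (Datatypes.S N)).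
      replace (Datatypes.S N + m)%nat with (Datatypes.S (N + m)) in Hsh by lia. nra. }
  intros N. assert (0 <= sum_f_R0 x N) by (apply sumR_nonneg; auto).
  destruct (Compare_dec.le_lt_dec m N) as [Hle|Hlt].
  - replace N with ((N - m) + m)%nat at 1 by lia.
    apply Rle_trans with (INR m + r * sum_f_R0 x (N - m)); [apply Hc|].
    assert (sum_f_R0 x (N - m) <= sum_f_R0 x N) by (apply sum_mono; auto; lia).
    nra.
  - assert (H1 := sum_le_len x N Hx1).
    assert (INR (Datatypes.S N) <= INR m) by (apply le_INR; lia).
    nra.
Qed.

Theorem mainTheorem18 (n : nat) (P : nat -> nat -> R) (ymin : R)
    (p : nat) (S : nat -> bool)
    (hn : (1 <= n)%nat) (hP : is_stochastic n P)
    (hy : is_min_nonzero_prob n P ymin) (hp : (p < n)%nat) :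
  let c := exp (- (ymin ^ n) / INR n) in
  (forall k : nat, (n <= k)%nat ->
     exists l, infinite_sum (fun m => hit_prob n P S (k + m) p) l /\
               l <= 2 * c ^ k) /\
  (infinite_sum (fun t => hit_prob n P S t p) 1 ->
     exists l, infinite_sum (fun t => INR t * hit_prob n P S t p) l /\
               l <= 5 * INR n / ymin ^ n).
Proof.
  intros c.
  assert (Hq := q_bounds n P hn hP ymin hy). unfold q in Hq.
  assert (Hhnn : forall t, 0 <= hit_prob n P S t p) by (intros; apply (h_nonneg n P S hn hP); auto).
  split.
  - intros k Hk. apply conv_bounded.
    + intros; apply Hhnn.
    + intros M. set (j := (k / n)%nat).
      apply Rle_trans with (b n P S k p); [apply (G_le n P S hn hP); auto|].
      assert (Hkj : (j * n <= k)%nat).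
      { unfold j. assert (H := Nat.div_mod_eq k n). lia. }
      apply Rle_trans with (b n P S (j * n) p).
      { replace k with (j * n + (k - j * n))%nat at 1 by lia. apply (b_dec n P S hn hP); auto. }
      apply Rle_trans with ((1 - ymin ^ n) ^ j); [apply (b_blocks n P S hn hP ymin hy); auto|].
      apply num_bound; auto.
  - intros _. apply conv_bounded.
    + intros t. apply Rmult_le_pos; [apply pos_INR|apply Hhnn].
    + intros N.
      set (x := fun k => b n P S k p).
      assert (Hx0 : forall t, 0 <= x t) by (intros; apply (b_nn n P S hn hP); auto).
      assert (Hx1 : forall t, x t <= 1) by (intros; apply (b_le1 n P S hn hP); auto).
      apply Rle_trans with (sum_f_R0 (fun k => x (Datatypes.S k)) N).
      { apply weighted; auto. intros k M. apply (G_le n P S hn hP); auto. }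
      apply Rle_trans with (sum_f_R0 x (Datatypes.S N)).
      { rewrite sumR_shift. specialize (Hx0 0%nat). lra. }
      assert (Hg := sum_geo_like x (1 - ymin ^ n) n hn Hx0 Hx1 ltac:(lra)
                      (fun k => b_shift n P S hn hP ymin hy k p hp) (Datatypes.S N)).
      assert (HnR : 0 <= INR n) by apply pos_INR.
      set (Tt := sum_f_R0 x (Datatypes.S N)) in *.
      assert (ymin ^ n * Tt <= INR n) by lra.
      apply Rle_trans with (INR n / ymin ^ n).
      { apply (Rmult_le_reg_l (ymin ^ n)); [lra|]. field_simplify; lra. }
      unfold Rdiv. apply Rmult_le_compat_r; [apply Rlt_le, Rinv_0_lt_compat; lra | lra].
Qed.
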